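(* Let $l^1 < l^2 < \dots < l^{S+1}$ be real numbers, let $g : [l^1, l^{S+1}] \to \mathbb{R}$ be continuous and also defined at $0$, and suppose that each interval $[l^s, l^{s+1}]$, $s \in \{1,\dots,S\}$, is either in $\check{S}$ ($g$ convex on $[l^s,l^{s+1}]$) or in $\hat{S}$ ($g$ concave on $[l^s,l^{s+1}]$). Let $\hat g : [l^1,l^{S+1}]\to\mathbb{R}$ be the piecewise-convex function equal to $g$ on intervals $[l^s,l^{s+1}]$ with $s\in\check S$, and equal to the secant $g(l^s) + \alpha^s (t - l^s)$ on intervals with $s \in \hat S$, where $\alpha^s = (g(l^{s+1}) - g(l^s))/(l^{s+1}-l^s)$. For $x \in [l^1, l^{S+1}]$ define $$\Phi(x) = \min \Big\{ \sum_{s\in\check S}\big( g(0) y^s + z^s\big) + \sum_{s \in \hat S}\big(\alpha^s x^s + (g(l^s) - \alpha^s l^s) y^s\big) \;:\; z^s \ge [g(x^s/y^s) - g(0)]\,y^s \ (s\in\check S),\ x = \sum_{s=1}^S x^s,\ l^s y^s \le x^s \le l^{s+1} y^s\ (s=1,\dots,S),\ \sum_{s=1}^S y^s = 1,\ y^s \ge 0 \Big\},$$ with the convention that when $y^s = 0$ (hence $x^s=0$) the perspective term $[g(x^s/y^s)-g(0)]y^s$ is $0$. Then $\Phi$ is the convex envelope of $\hat g$ on $[l^1,l^{S+1}]$; that is, the constraints of this continuous relaxation of the Multiple Choice Model describe the convex envelope of the (piecewise-convex) function.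
   Context: This is the continuous relaxation (binary variables $y^s$ relaxed to $y^s\ge 0$) of the Multiple Choice Model with perspective reformulation for a single univariate function $g$ in the Sequential Convex MINLP scheme: on intervals where $g$ is concave it is replaced by its secant (its convex envelope on that interval), and on intervals where $g$ is convex the perspective of $g(\cdot)-g(0)$ is used. The convex envelope of a function is the largest convex function lying below it. *)

(* Defs.v *)
From HB Require Import structures.
From mathcomp Require Import all_boot all_order all_algebra.
From mathcomp Require Import all_classical all_reals all_analysis.
Set Implicit Arguments. Unset Strict Implicit. Unset Printing Implicit Defensive.
Import Order.TTheory GRing.Theory Num.Theory.
Local Open Scope classical_set_scope.
Local Open Scope ring_scope.

Section Defs.
Variable R : realType.

Definition convex_on (f : R -> R) (a b : R) : Prop :=
  forall x y t : R, a <= x <= b -> a <= y <= b -> 0 <= t <= 1 ->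
    f (t * x + (1 - t) * y) <= t * f x + (1 - t) * f y.

Definition concave_on (f : R -> R) (a b : R) : Prop :=
  forall x y t : R, a <= x <= b -> a <= y <= b -> 0 <= t <= 1 ->
    t * f x + (1 - t) * f y <= f (t * x + (1 - t) * y).

Definition convex_envelope_on (f h : R -> R) (a b : R) : Prop :=
  [/\ convex_on h a b,
      (forall x, a <= x <= b -> h x <= f x) &
      (forall k : R -> R, convex_on k a b ->
         (forall x, a <= x <= b -> k x <= f x) ->
         forall x, a <= x <= b -> k x <= h x)].

Definition secant_slope (g : R -> R) (l : nat -> R) (s : nat) : R :=
  (g (l s.+1) - g (l s)) / (l s.+1 - l s).

Definition persp (g : R -> R) (y x : R) : R :=
  if y == 0 then 0 else (g (x / y) - g 0) * y.

(* Breakpoints are l 0 < l 1 < ... < l S (the paper's l^1 < ... < l^{S+1});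
   interval s : 'I_S is [l s, l s.+1]; cvx s = true iff s is in S-check
   (convex piece), cvx s = false iff s is in S-hat (concave piece). *)
Definition mcm_feasible (S : nat) (l : nat -> R) (g : R -> R)
    (cvx : 'I_S -> bool) (x : R) (xs ys zs : 'I_S -> R) : Prop :=
  [/\ (forall s : 'I_S, cvx s -> persp g (ys s) (xs s) <= zs s),
      x = \sum_(s < S) xs s,
      (forall s : 'I_S, l s * ys s <= xs s <= l s.+1 * ys s),
      \sum_(s < S) ys s = 1 &
      (forall s : 'I_S, 0 <= ys s)].

Definition mcm_objective (S : nat) (l : nat -> R) (g : R -> R)
    (cvx : 'I_S -> bool) (xs ys zs : 'I_S -> R) : R :=
  \sum_(s < S | cvx s) (g 0 * ys s + zs s)
  + \sum_(s < S | ~~ cvx s)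
      (secant_slope g l s * xs s + (g (l s) - secant_slope g l s * l s) * ys s).

Definition mcm_value (S : nat) (l : nat -> R) (g : R -> R)
    (cvx : 'I_S -> bool) (x : R) : R :=
  inf [set v : R | exists xs ys zs : 'I_S -> R,
         mcm_feasible l g cvx x xs ys zs /\ v = mcm_objective l g cvx xs ys zs].

End Defs.

(* Main.v *)
Require Import Defs.
From HB Require Import structures.
From mathcomp Require Import all_boot all_order all_algebra.
From mathcomp Require Import all_classical all_reals all_analysis.
From mathcomp Require Import ring lra.
Import Order.TTheory GRing.Theory Num.Theory numFieldNormedType.Exports.
Local Open Scope classical_set_scope.
Local Open Scope ring_scope.

Lemma eq_ler_subr {R : realType} {u v : R} : u <= v -> 0 <= v - u.
Proof. by rewrite subr_ge0. Qed.
Section Gen.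
Variable R : realType.

Lemma cvx_comb_in (a b x y t : R) : a <= x <= b -> a <= y <= b -> 0 <= t <= 1 ->
  a <= t * x + (1 - t) * y <= b.
Proof.
move=> /andP[h1 h2] /andP[h3 h4] /andP[h5 h6].
have t1 : 0 <= 1 - t by rewrite subr_ge0.
have e1 := mulr_ge0 h5 (eq_ler_subr h1).
have e2 := mulr_ge0 t1 (eq_ler_subr h3).
have e3 := mulr_ge0 h5 (eq_ler_subr h2).
have e4 := mulr_ge0 t1 (eq_ler_subr h4).
rewrite !mulrBr in e1 e2 e3 e4.
apply/andP; split; lra.
Qed.

Lemma jensenW (k : R -> R) (a b : R) n (w p : 'I_n -> R) :
  convex_on k a b -> (forall i, 0 <= w i) -> (forall i, a <= p i <= b) ->
  0 < \sum_(i < n) w i ->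
  a <= (\sum_(i < n) w i * p i) / (\sum_(i < n) w i) <= b /\
  k ((\sum_(i < n) w i * p i) / (\sum_(i < n) w i)) <=
    (\sum_(i < n) w i * k (p i)) / (\sum_(i < n) w i).
Proof.
move=> kc; elim: n w p => [|n IH] w p w0 pin.
  by rewrite big_ord0 ltxx.
rewrite !big_ord_recr /=.
set W' := \sum_(i < n) w (widen_ord _ i).
set P' := \sum_(i < n) w (widen_ord _ i) * p (widen_ord _ i).
set K' := \sum_(i < n) w (widen_ord _ i) * k (p (widen_ord _ i)).
have W'0 : 0 <= W' by apply: sumr_ge0 => i _.
have wn0 := w0 ord_max.
move=> Wpos.
have [W'e|W'pos] := eqVneq W' 0.
  have wz : forall i : 'I_n, w (widen_ord (leqnSn n) i) = 0.
    move=> i; move/eqP: W'e; rewrite psumr_eq0; last by move=> j _.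
    by move/allP => /(_ i (mem_index_enum _)) /implyP /(_ isT) /eqP.
  have P'0 : P' = 0 by rewrite /P' big1 // => i _; rewrite wz mul0r.
  have K'0 : K' = 0 by rewrite /K' big1 // => i _; rewrite wz mul0r.
  rewrite W'e P'0 K'0 !add0r in Wpos *.
  have wn : w ord_max != 0 by rewrite gt_eqF.
  have e z : w ord_max * z / w ord_max = z by rewrite mulrAC divff // mul1r.
  by rewrite !e; split=> //; exact: pin.
have W'p : 0 < W' by rewrite lt_def W'pos W'0.
have [IH1 IH2] := IH (fun i => w (widen_ord (leqnSn n) i)) (fun i => p (widen_ord (leqnSn n) i)) (fun i => w0 _) (fun i => pin _) W'p.
rewrite -/W' -/P' -/K' in IH1 IH2.
set W := W' + w ord_max.
have Wn0 : W != 0 by rewrite gt_eqF.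
set mu := W' / W.
have mu01 : 0 <= mu <= 1.
  apply/andP; split; first by rewrite divr_ge0 // ltW.
  by rewrite ler_pdivrMr // mul1r lerDl.
have E1 : (P' + w ord_max * p ord_max) / W = mu * (P' / W') + (1 - mu) * p ord_max.
  rewrite /mu /W; field; apply/andP; split => //; rewrite gt_eqF //.
have E2 : (K' + w ord_max * k (p ord_max)) / W = mu * (K' / W') + (1 - mu) * k (p ord_max).
  rewrite /mu /W; field; apply/andP; split => //; rewrite gt_eqF //.
rewrite E1 E2; split; first exact: cvx_comb_in.
apply: le_trans; first exact: (kc _ _ _ IH1 (pin ord_max) mu01).
rewrite lerD2r ler_wpM2l //; by case/andP: mu01.
Qed.

Lemma jensen (k : R -> R) (a b : R) n (w p : 'I_n -> R) :
  convex_on k a b -> (forall i, 0 <= w i) -> (forall i, a <= p i <= b) ->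
  \sum_(i < n) w i = 1 ->
  k (\sum_(i < n) w i * p i) <= \sum_(i < n) w i * k (p i).
Proof.
move=> kc w0 pin w1.
have := @jensenW k a b n w p kc w0 pin; rewrite w1 !divr1 => /(_ ltr01) [].
done.
Qed.

Lemma inf_min (E : set R) m : E m -> (forall v, E v -> m <= v) -> inf E = m.
Proof.
move=> Em lb; apply/le_anti/andP; split.
  by apply: ge_inf => //; exists m.
by apply: lb_le_inf => //; exists m.
Qed.
End Gen.
Arguments jensen {R} k a b n w p.

Section Top.
Variable R : realType.
Variable S : nat.
Definition PT := prod_topology (fun _ : 'I_S => (R * R)%type).

Lemma coord1_cont (i : 'I_S) : continuous (fun f : PT => (f i).1).
Proof.
move=> f.
apply: (@continuous_comp _ _ _ (fun f : PT => f i) fst).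
 exact: proj_continuous.
exact: cvg_fst.
Qed.
Lemma coord2_cont (i : 'I_S) : continuous (fun f : PT => (f i).2).
Proof.
move=> f.
apply: (@continuous_comp _ _ _ (fun f : PT => f i) snd).
 exact: proj_continuous.
exact: cvg_snd.
Qed.
Lemma sum_cont (F : 'I_S -> PT -> R) : (forall i, continuous (F i)) ->
  continuous (fun f => \sum_(i < S) F i f).
Proof.
move=> H f; elim: (index_enum _) => [|i r IH].
  rewrite (_ : (fun f0 : PT => _) = (fun=> 0)); last by apply/funext=> ?; rewrite big_nil.
  exact: cst_continuous.
rewrite (_ : (fun f0 : PT => _) = (fun f0 => F i f0 + \sum_(j <- r) F j f0)); last by apply/funext=> ?; rewrite big_cons.
exact: (@continuousD _ _ _ (F i) (fun f0 => \sum_(j <- r) F j f0) f (H i f) IH).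
Qed.
End Top.
Arguments coord1_cont {R S}.
Arguments coord2_cont {R S}.
Arguments sum_cont {R S}.

Section Clamp.
Variable R : realType.
Definition clamp (a b t : R) := Num.max a (Num.min t b).

Lemma clamp_cont a b : continuous (clamp a b).
Proof.
move=> x.
apply: (@continuous_max R R (fun=> a) (fun t => Num.min t b)).
  exact: cst_continuous.
apply: (@continuous_min R R id (fun=> b)).
  exact: cvg_id.
exact: cst_continuous.
Qed.

Lemma clamp_in a b t : a <= b -> a <= clamp a b t <= b.
Proof.
move=> ab; rewrite /clamp; apply/andP; split; first by rewrite le_max lexx.
by rewrite ge_max ab ge_min lexx orbT.
Qed.

Lemma clamp_id a b t : a <= t <= b -> clamp a b t = t.
Proof.
by case/andP=> h1 h2; rewrite /clamp (min_l h2) (max_r h1).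
Qed.

Lemma gext_cont (g : R -> R) a b : a <= b ->
  {within [set t : R | a <= t <= b], continuous g} ->
  continuous (fun t => g (clamp a b t)).
Proof.
move=> ab /subspace_continuousP gc x.
have cA := @clamp_in a b x ab.

apply: (@cvg_comp _ _ _ (clamp a b) g _ (within [set t : R | a <= t <= b] (nbhs (clamp a b x)))); last exact: gc.
move=> W /= HW.
have := @clamp_cont a b x [set y | a <= y <= b -> W y] HW.
rewrite /= nbhs_simpl /=.
apply: filterS => y /= Hy; apply: Hy; exact: clamp_in.
Qed.
End Clamp.
Arguments clamp {R}.
Arguments clamp_cont {R}.
Arguments clamp_in {R}.
Arguments clamp_id {R}.
Arguments gext_cont {R}.

Section Main.
Variables (R : realType) (S : nat) (l : nat -> R) (g ghat : R -> R) (cvx : 'I_S -> bool).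
Hypothesis Sp : (0 < S)%N.
Hypothesis Hl : forall i : nat, (i < S)%N -> l i < l i.+1.
Hypothesis Hg : {within [set t : R | l 0%N <= t <= l S], continuous g}.
Hypothesis Hcv : forall s : 'I_S, cvx s -> convex_on g (l s) (l s.+1).
Hypothesis Hcc : forall s : 'I_S, ~~ cvx s -> concave_on g (l s) (l s.+1).
Hypothesis Hgh : forall (s : 'I_S) (t : R), l s <= t <= l s.+1 ->
     ghat t = (if cvx s then g t
               else g (l s) + secant_slope g l s * (t - l s)).

Lemma l_mono i j : (i <= j <= S)%N -> l i <= l j.
Proof.
move=> /andP[ij jS]; elim: j ij jS => [|j IH] ij jS.
  by rewrite leqn0 in ij; rewrite (eqP ij).
rewrite leq_eqVlt in ij; case/orP: ij => [/eqP -> //| ij].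
rewrite ltnS in ij.
exact: le_trans (IH ij (ltnW jS)) (ltW (Hl j jS)).
Qed.

Lemma piece_in (s : 'I_S) : l 0%N <= l s /\ l s.+1 <= l S.
Proof.
split; apply: l_mono; rewrite ?leq0n /= ?ltn_ord ?(ltnW (ltn_ord s)) //.
by rewrite leqnn andbT.
Qed.

Lemma exists_piece x : l 0%N <= x <= l S -> exists s : 'I_S, l s <= x <= l s.+1.
Proof.
move=> /andP[ax xb].
suff H : forall n, (n < S)%N -> x <= l n.+1 -> exists s : 'I_S, l s <= x <= l s.+1.
  by apply: (H S.-1); rewrite ?prednK // ltn_predL.
elim=> [|n IH] nS xn.
  by exists (Ordinal nS); rewrite /= ax xn.
case: (leP x (l n.+1)) => [xle|xgt].
  exact: IH (ltnW nS) xle.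
by exists (Ordinal nS); rewrite /= xn (ltW xgt).
Qed.

Definition G (s : 'I_S) (t : R) :=
  if cvx s then g t else g (l s) + secant_slope g l s * (t - l s).

Lemma G_convex s : convex_on (G s) (l s) (l s.+1).
Proof.
rewrite /G; case h: (cvx s); first exact: Hcv.
move=> x y t _ _ _ /=; lra.
Qed.

Definition Box : set (PT R S) :=
  [set f | forall i : 'I_S, ([set y : R | 0 <= y <= 1] `*` [set t | l i <= t <= l i.+1]) (f i)].
Definition Dom (x : R) : set (PT R S) :=
  Box `&` [set f | \sum_(i < S) (f i).1 = 1] `&` [set f | \sum_(i < S) (f i).1 * (f i).2 = x].

Definition Vval (f : PT R S) := \sum_(i < S) (f i).1 * G i (f i).2.
Definition Fobj (f : PT R S) := \sum_(i < S) (f i).1 * G i (clamp (l 0%N) (l S) (f i).2).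


Lemma Ge_cont (i : 'I_S) : continuous (fun t => G i (clamp (l 0%N) (l S) t)).
Proof.
have ab : l 0%N <= l S by apply: l_mono; rewrite leq0n leqnn.
rewrite /G; case: (cvx i).
  exact: gext_cont.
move=> t.
apply: (@continuousD _ _ _ (fun=> g (l i)) (fun t => secant_slope g l i * (clamp (l 0%N) (l S) t - l i))).
  exact: cst_continuous.
apply: (@continuousM _ _ (fun=> secant_slope g l i) (fun t => clamp (l 0%N) (l S) t - l i)).
  exact: cst_continuous.
apply: (@continuousB _ _ _ (clamp (l 0%N) (l S)) (fun=> l i)).
  exact: clamp_cont.
exact: cst_continuous.
Qed.

Lemma Fobj_cont : continuous Fobj.
Proof.
apply: sum_cont => i f.
apply: (@continuousM _ _ (fun f : PT R S => (f i).1) (fun f : PT R S => G i (clamp (l 0%N) (l S) (f i).2))).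
  exact: coord1_cont.
apply: (@continuous_comp _ _ _ (fun f : PT R S => (f i).2) (fun t => G i (clamp (l 0%N) (l S) t))).
  exact: coord2_cont.
exact: Ge_cont.
Qed.

Lemma Dom_compact x : compact (Dom x).
Proof.
apply: compact_closedI; first apply: compact_closedI.
- apply: (@tychonoff _ (fun _ : 'I_S => (R * R)%type) (fun i => [set y : R | 0 <= y <= 1] `*` [set t | l i <= t <= l i.+1])).
  move=> i; apply: compact_setX; rewrite -set_itvcc; exact: segment_compact.
- exact: (proj1 (continuous_closedP _) (sum_cont (fun i (f : PT R S) => (f i).1) (fun i f => coord1_cont i f)) _ (@closed_eq _ 1)).
- exact: (proj1 (continuous_closedP _) (sum_cont (fun i (f : PT R S) => (f i).1 * (f i).2) (fun i f => continuousM (coord1_cont i f) (coord2_cont i f))) _ (@closed_eq _ x)).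
Qed.

Lemma Fobj_Vval x f : Dom x f -> Fobj f = Vval f.
Proof.
move=> [[Hb _] _]; apply: eq_bigr => i _; rewrite clamp_id //.
have [h1 h2] := Hb i; have [p1 p2] := piece_in i.
case/andP: h2 => h3 h4; apply/andP; split; [exact: le_trans p1 h3|exact: le_trans h4 p2].
Qed.

Definition f0 (s : 'I_S) (x : R) : PT R S := fun i => if i == s then (1, x) else (0, l i).

Lemma f0_dom (s : 'I_S) x : l s <= x <= l s.+1 -> Dom x (f0 s x) /\ Vval (f0 s x) = ghat x.
Proof.
move=> xin; split; first split; first split.
- move=> i; rewrite /f0; case: eqP => [->|_]; split => //=; rewrite ?ler01 ?lexx //.
  by rewrite (ltW (Hl i (ltn_ord i))).
- rewrite /= (bigD1 s) //= /f0 eqxx big1 ?addr0 // => i /negbTE -> //.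
- rewrite /= (bigD1 s) //= /f0 eqxx big1 ?addr0 ?mul1r // => i /negbTE -> /=; by rewrite mul0r.
rewrite /Vval (bigD1 s) //= /f0 eqxx big1 ?addr0 ?mul1r.
  by rewrite (Hgh s x xin).
by move=> i /negbTE -> /=; rewrite mul0r.
Qed.

Lemma attained x : l 0%N <= x <= l S ->
  exists2 c, Dom x c & forall f, Dom x f -> Vval c <= Vval f.
Proof.
move=> /(exists_piece x) [s xs].
have [D0 _] := f0_dom s x xs.
have [c cD cmin] := compact_EVT_min (ex_intro _ _ D0) (Dom_compact x) (@continuous_subspaceT _ _ (Dom x) Fobj Fobj_cont).
rewrite inE in cD.
exists c => // f fD.
rewrite -(Fobj_Vval _ _ cD) -(Fobj_Vval _ _ fD); apply: cmin; by rewrite inE.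
Qed.

Lemma to_sol x f : Dom x f -> exists xs ys zs : 'I_S -> R,
  mcm_feasible l g cvx x xs ys zs /\ mcm_objective l g cvx xs ys zs = Vval f.
Proof.
move=> [[Hb H1] H2].
exists (fun i => (f i).1 * (f i).2), (fun i => (f i).1),
  (fun i => persp g (f i).1 ((f i).1 * (f i).2)).
split; first split.
- by move=> i _.
- by rewrite H2.
- move=> i; have [/andP[y0 _] /andP[t1 t2]] := Hb i.
  by rewrite (mulrC (l i)) (mulrC (l i.+1)) !ler_wpM2l.
- exact: H1.
- by move=> i; have [/andP[y0 _] _] := Hb i.
rewrite /mcm_objective /Vval [X in _ = X](bigID (fun i => cvx i)) /=; congr (_ + _).
  apply: eq_bigr => i ci; rewrite /G ci /persp.
  case: eqP => [->|y0]; first by rewrite !mul0r mulr0 addr0.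
  rewrite (mulrC (f i).1 (f i).2) mulfK; last by apply/eqP.
  ring.
apply: eq_bigr => i ci; rewrite /G (negbTE ci); ring.
Qed.

Lemma from_sol x xs ys zs : mcm_feasible l g cvx x xs ys zs ->
  exists f, Dom x f /\ Vval f <= mcm_objective l g cvx xs ys zs.
Proof.
move=> [H1 H2 H3 H4 H5].
have y1 : forall i, ys i <= 1.
  move=> i; move: H4; rewrite (bigD1 i) //= => e.
  have : 0 <= \sum_(j < S | j != i) ys j by apply: sumr_ge0 => j _.
  lra.
have x0 : forall i, ys i = 0 -> xs i = 0.
  move=> i e; have := H3 i; rewrite e !mulr0 => h; apply/le_anti; rewrite andbC; exact: h.
exists (fun i => (ys i, if ys i == 0 then l i else xs i / ys i)); split; first split; first split.
- move=> i; split; first by rewrite /= H5 y1.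
  rewrite /=; case: eqP => [_|yn0].
    by rewrite lexx (ltW (Hl i (ltn_ord i))).
  have yp : 0 < ys i by rewrite lt_def H5 andbT; apply/eqP.
  have /andP[h1 h2] := H3 i.
  by rewrite ler_pdivlMr // ler_pdivrMr // h1 h2.
- exact: H4.
- rewrite /= H2; apply: eq_bigr => i _ /=; case: eqP => [e|yn0].
    by rewrite e mul0r x0.
  by rewrite mulrC mulrAC -mulrA divff ?mulr1 //; apply/eqP.
rewrite /mcm_objective /Vval [X in X <= _](bigID (fun i => cvx i)) /=.
apply: lerD; apply: ler_sum => i ci; rewrite /G ?ci ?(negbTE ci) /=.
  have := H1 i ci; rewrite /persp.
  case: eqP => [e|yn0] h; first by rewrite e !mul0r mulr0 add0r.
  lra.
case: eqP => [e|yn0]; first by rewrite e x0 // !mul0r !mulr0 addr0.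
rewrite -subr_ge0 (_ : _ - _ = 0) //.
field; apply/eqP; exact: yn0.
Qed.

Lemma Phi_eq x c : Dom x c -> (forall f, Dom x f -> Vval c <= Vval f) ->
  mcm_value l g cvx x = Vval c.
Proof.
move=> cD cmin; apply: inf_min.
  have [xs [ys [zs [F O]]]] := to_sol x c cD.
  by exists xs, ys, zs; split.
move=> v [xs [ys [zs [F ->]]]].
have [f [fD fle]] := from_sol x xs ys zs F.
exact: le_trans (cmin f fD) fle.
Qed.

Definition cy (lam y1 y2 : R) := lam * y1 + (1 - lam) * y2.
Definition ct (s : 'I_S) (lam y1 t1 y2 t2 : R) :=
  if cy lam y1 y2 == 0 then l s else (lam * y1 * t1 + (1 - lam) * y2 * t2) / cy lam y1 y2.

Lemma comb_term (s : 'I_S) lam y1 t1 y2 t2 : 0 <= lam <= 1 -> 0 <= y1 <= 1 ->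
  l s <= t1 <= l s.+1 -> 0 <= y2 <= 1 -> l s <= t2 <= l s.+1 ->
  [/\ 0 <= cy lam y1 y2 <= 1, l s <= ct s lam y1 t1 y2 t2 <= l s.+1,
   cy lam y1 y2 * ct s lam y1 t1 y2 t2 = lam * (y1 * t1) + (1 - lam) * (y2 * t2) &
   cy lam y1 y2 * G s (ct s lam y1 t1 y2 t2) <=
     lam * (y1 * G s t1) + (1 - lam) * (y2 * G s t2)].
Proof.
move=> hl hy1 ht1 hy2 ht2.
have hy : 0 <= cy lam y1 y2 <= 1 by rewrite /cy; apply: cvx_comb_in.
have ls : l s <= l s.+1 by rewrite (ltW (Hl s (ltn_ord s))).
case/andP: hl => l0 l1; case/andP: hy1 => y10 y11; case/andP: hy2 => y20 y21.
have p1 : 0 <= lam * y1 by rewrite mulr_ge0.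
have p2 : 0 <= (1 - lam) * y2 by rewrite mulr_ge0 // subr_ge0.
rewrite /ct; case: eqP => [e|yn0].
  have q1 : lam * y1 = 0 by move: e; rewrite /cy; lra.
  have q2 : (1 - lam) * y2 = 0 by move: e; rewrite /cy; lra.
  split => //; first by rewrite lexx ls.
    by rewrite e !mulrA q1 q2 !mul0r addr0.
  by rewrite e !mulrA q1 q2 !mul0r addr0.
have yp : 0 < cy lam y1 y2 by rewrite lt_def; case/andP: hy => -> _; rewrite andbT; apply/eqP.
have yn : cy lam y1 y2 != 0 by apply/eqP.
set y := cy lam y1 y2 in yp yn hy yn0 *.
set mu := lam * y1 / y.
have mu01 : 0 <= mu <= 1.
  apply/andP; split; first by rewrite divr_ge0 // ltW.
  rewrite ler_pdivrMr // mul1r /y /cy; lra.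
have et : (lam * y1 * t1 + (1 - lam) * y2 * t2) / y = mu * t1 + (1 - mu) * t2.
  rewrite /mu /y /cy; field; exact: yn.
rewrite et; split => //.
- exact: cvx_comb_in.
- rewrite /mu /y /cy; field; exact: yn.
apply: le_trans.
  apply: (ler_wpM2l (ltW yp)); exact: (G_convex s t1 t2 mu ht1 ht2 mu01).
rewrite -subr_ge0 (_ : _ - _ = 0) //.
rewrite /mu /y /cy; field; exact: yn.
Qed.

Lemma main_sec :
  (forall x : R, l 0%N <= x <= l S ->
     exists xs ys zs : 'I_S -> R,
       mcm_feasible l g cvx x xs ys zs /\
       mcm_objective l g cvx xs ys zs = mcm_value l g cvx x) /\
  convex_envelope_on ghat (mcm_value l g cvx) (l 0%N) (l S).
Proof.
split.
  move=> x xin; have [c cD cmin] := attained x xin.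
  have [xs [ys [zs [F O]]]] := to_sol x c cD.
  by exists xs, ys, zs; split => //; rewrite O (Phi_eq x c cD cmin).
split.
- move=> x1 x2 lam h1 h2 hl.
  have [c1 c1D c1m] := attained x1 h1; have [c2 c2D c2m] := attained x2 h2.
  rewrite (Phi_eq _ _ c1D c1m) (Phi_eq _ _ c2D c2m).
  have xin : l 0%N <= lam * x1 + (1 - lam) * x2 <= l S by apply: cvx_comb_in.
  have [c cD cm] := attained _ xin; rewrite (Phi_eq _ _ cD cm).
  case: c1D => [[B1 S1] P1]; case: c2D => [[B2 S2] P2].
  pose f : PT R S := fun i => (cy lam (c1 i).1 (c2 i).1, ct i lam (c1 i).1 (c1 i).2 (c2 i).1 (c2 i).2).
  have CT i := comb_term i lam (c1 i).1 (c1 i).2 (c2 i).1 (c2 i).2 hl (B1 i).1 (B1 i).2 (B2 i).1 (B2 i).2.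
  have E1 i : 0 <= (f i).1 <= 1 by case: (CT i).
  have E2 (i : 'I_S) : l i <= (f i).2 <= l i.+1 by case: (CT i).
  have E3 (i : 'I_S) : (f i).1 * (f i).2 = lam * ((c1 i).1 * (c1 i).2) + (1 - lam) * ((c2 i).1 * (c2 i).2) by case: (CT i).
  have E4 (i : 'I_S) : (f i).1 * G i (f i).2 <= lam * ((c1 i).1 * G i (c1 i).2) + (1 - lam) * ((c2 i).1 * G i (c2 i).2) by case: (CT i).
  have fD : Dom (lam * x1 + (1 - lam) * x2) f.
    split; first split.
    + by move=> i; split; [exact: E1|exact: E2].
    + rewrite /= /f /cy /= big_split /= -!mulr_sumr S1 S2; ring.
    + by rewrite /= (eq_bigr _ (fun i _ => E3 i)) big_split /= -!mulr_sumr P1 P2.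
  apply: le_trans (cm f fD) _.
  rewrite /Vval; apply: le_trans (ler_sum _ (fun i _ => E4 i)) _.
  by rewrite big_split /= -!mulr_sumr.
- move=> x xin; have [s xs] := exists_piece x xin.
  have [D0 V0] := f0_dom s x xs.
  have [c cD cm] := attained x xin.
  by rewrite (Phi_eq _ _ cD cm) -V0; exact: cm.
- move=> k kc kle x xin.
  have [c cD cm] := attained x xin.
  rewrite (Phi_eq _ _ cD cm).
  case: cD => [[B S1] P1].
  have tin (i : 'I_S) : l 0%N <= (c i).2 <= l S.
    have [_ /andP[h1 h2]] := B i; have [p1 p2] := piece_in i.
    by rewrite (le_trans p1 h1) (le_trans h2 p2).
  rewrite -P1.
  apply: le_trans (jensen k (l 0%N) (l S) S (fun i => (c i).1) (fun i => (c i).2) kc _ tin S1) _.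
    by move=> i; have [/andP[] ] := B i.
  rewrite /Vval; apply: ler_sum => i _.
  have [/andP[y0 _] ti] := B i.
  apply: ler_wpM2l => //.
  have := Hgh i (c i).2 ti; rewrite -/(G i (c i).2) => <-.
  exact: kle.
Qed.
End Main.

Theorem corollary1 (R : realType) (S : nat) (l : nat -> R) (g ghat : R -> R)
    (cvx : 'I_S -> bool) :
  (0 < S)%N ->
  (forall i : nat, (i < S)%N -> l i < l i.+1) ->
  {within [set t : R | l 0%N <= t <= l S], continuous g} ->
  (forall s : 'I_S, cvx s -> convex_on g (l s) (l s.+1)) ->
  (forall s : 'I_S, ~~ cvx s -> concave_on g (l s) (l s.+1)) ->
  (forall (s : 'I_S) (t : R), l s <= t <= l s.+1 ->
     ghat t = (if cvx s then g t
               else g (l s) + secant_slope g l s * (t - l s))) ->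
  (forall x : R, l 0%N <= x <= l S ->
     exists xs ys zs : 'I_S -> R,
       mcm_feasible l g cvx x xs ys zs /\
       mcm_objective l g cvx xs ys zs = mcm_value l g cvx x) /\
  convex_envelope_on ghat (mcm_value l g cvx) (l 0%N) (l S).
Proof.
move=> Sp Hl Hg Hcv Hcc Hgh.
by apply: main_sec.
Qed.
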